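(* For the ternary soft heap with error parameter $0<\epsilon<1$, any sequence of operations consisting of $N$ insertions and $\delta$ extract-min operations takes total time $O(N+\delta\lg\frac1\epsilon)$ (for $\epsilon\le 1/2$); that is, \textsf{insert} takes amortized $O(1)$ time and \textsf{extract-min} amortized $O(\lg\frac1\epsilon)$ time.
   Context: Ternary soft heap with error parameter $0<\epsilon<1$ and threshold $r_0=\max(2,\lceil\lg(1/\epsilon)\rceil)$ ($\lg$ = binary logarithm). Items are (key, value) pairs with distinct keys from a totally ordered universe. A rank-$r$ tree is a perfectly balanced rooted tree in which every internal node has exactly $3$ children and all $3^r$ leaves are at depth $r$; a node whose subtree has height $r$ has rank $r$. Each leaf corresponds to a distinct insertion. Each node holds at most one item (it may be empty); the tree is heap-ordered (an item's key is at most the keys of items at descendants). Each item $e$ held at a node carries a corruption-set $C(e)$ (empty when inserted), stored as a cyclic linked list allowing constant-time concatenation. The heap is a list of trees in nondecreasing rank order, with at most $2$ trees of each rank, together with, for each root, a suffix-min reference to the root with minimum item among it and all later roots. \textsf{insert}$(e)$: add a rank-$0$ tree holding $e$ at the front; while the first three trees have equal rank $r$, link them: create a new node of rank $r+1$ with the three roots as children and fill it; then update the suffix-min reference of the first tree. Filling an empty node $v$ of rank $r$: a single pull moves to $v$ the minimum-key item among $v$'s children and then recursively fills the child it came from (a node whose subtree holds no items stays empty). If $r\le r_0$, $v$ is filled by one pull; if $r>r_0$, two items $e_1,e_2$ with $\mathrm{key}(e_1)\le\mathrm{key}(e_2)$ are pulled up successively, $e_1$ and all of $C(e_1)$ are added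 to $C(e_2)$ ($e_1$ becomes corrupted), and $e_2$ is stored at $v$ (if only one item is available, it is stored). \textsf{extract-min}: let $e$ be the minimum-key item among roots (found via the first suffix-min reference); if $C(e)\neq\emptyset$, remove and return an item of $C(e)$ with current key $\mathrm{key}(e)$; otherwise remove $e$, refill its root, update the suffix-min references from that root back to the front of the list, and return $e$ with the corruptions created. *)

(* Defs.v *)
From mathcomp Require Import all_boot all_order.
From Stdlib Require Import Reals ZArith.

Set Implicit Arguments.
Unset Strict Implicit.
Unset Printing Implicit Defensive.

Definition lg (x : R) : R := (ln x / ln 2)%R.

(* ceiling on Stdlib reals: up r is the integer with r < up r <= r + 1,
   so floor r = up r - 1 and ceil x = - floor (- x) = 1 - up (- x). *)
Definition Rceil (x : R) : Z := (1 - up (- x))%Z.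

Definition r0_of (eps : R) : nat := maxn 2 (Z.to_nat (Rceil (lg (/ eps)))).

Section SoftHeap.
Context {disp : Order.disp_t} (T : orderType disp) (V : Type).

(* An item: its (original) key, its value, and its corruption set C(e),
   a list of corrupted (original key, value) pairs whose current key is
   the key of the item holding them. *)
Record item := Item { ikey : T; ival : V; icset : seq (T * V) }.

Inductive tree :=
| Leaf of option item
| Node of option item & tree & tree & tree.

Definition root (t : tree) : option item :=
  match t with Leaf o => o | Node o _ _ _ => o end.

(* rank = height of the subtree *)
Fixpoint height (t : tree) : nat :=
  match t with
  | Leaf _ => 0
  | Node _ a b c => (maxn (height a) (maxn (height b) (height c))).+1
  end.

Definition le_opt (o1 o2 : option item) : bool :=
  match o1, o2 with
  | Some e1, Some e2 => (ikey e1 <= ikey e2)%O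
  | Some _, None => true
  | None, _ => false
  end.

Definition pull (f : tree -> tree * nat) (a b c : tree)
  : option item * tree * tree * tree * nat :=
  let ra := root a in let rb := root b in let rc := root c in
  if le_opt ra rb && le_opt ra rc then
    let: (a', k) := f a in (ra, a', b, c, k.+1)
  else if le_opt rb rc then
    let: (b', k) := f b in (rb, a, b', c, k.+1)
  else if rc is Some _ then
    let: (c', k) := f c in (rc, a, b, c', k.+1)
  else (None, a, b, c, 1).

Variable r0 : nat.

(* Filling a node (whose current item is discarded / assumed empty),
   with fuel [n] (enough fuel is the height of the tree). *)
Fixpoint fill (n : nat) (t : tree) : tree * nat :=
  match t with
  | Leaf _ => (Leaf None, 1)
  | Node _ a b c =>
    match n with
    | 0 => (Node None a b c, 1)
    | n'.+1 =>
      let: (e1, a1, b1, c1, k1) := pull (fill n') a b c in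
      if height t <= r0 then (Node e1 a1 b1 c1, k1.+1)
      else
        match e1 with
        | None => (Node None a1 b1 c1, k1.+1)
        | Some x1 =>
          let: (e2, a2, b2, c2, k2) := pull (fill n') a1 b1 c1 in
          match e2 with
          | None => (Node (Some x1) a2 b2 c2, (k1 + k2).+1)
          | Some x2 =>
            (* e1 becomes corrupted: e1 and C(e1) are added to C(e2) *)
            (Node (Some (Item (ikey x2) (ival x2)
                             (icset x2 ++ (ikey x1, ival x1) :: icset x1)))
                  a2 b2 c2, (k1 + k2).+1)
          end
        end
    end
  end.

Definition fillt (t : tree) : tree * nat := fill (height t) t.

Definition set_root (o : option item) (t : tree) : tree :=
  match t with Leaf _ => Leaf o | Node _ a b c => Node o a b c end.

(* A heap is the list of trees, in nondecreasing rank order. Suffix-min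
   references are not stored explicitly: they are determined by the roots,
   and their maintenance cost is charged explicitly below. *)
Definition heap := seq tree.

(* Repeated linking of the first three trees while they have equal rank
   (fuel n; size of the list + 1 suffices).  Cost: 1 per test, plus the
   cost of filling each newly created node. *)
Fixpoint links (n : nat) (h : heap) : heap * nat :=
  match n with
  | 0 => (h, 1)
  | n'.+1 =>
    match h with
    | t1 :: t2 :: t3 :: rest =>
      if (height t1 == height t2) && (height t2 == height t3) then
        let: (t, c) := fillt (Node None t1 t2 t3) in
        let: (h', c') := links n' (t :: rest) in (h', (c + c').+1)
      else (h, 1)
    | _ => (h, 1)
    end
  end.

(* insert: add a rank-0 tree at the front, link, then update the suffix-min
   reference of the first tree (cost 1). *)
Definition insert (k : T) (v : V) (h : heap) : heap * nat :=
  let: (h', c) := links (size h).+1 (Leaf (Some (Item k v [::])) :: h) in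
  (h', c.+1).

Fixpoint minr (h : heap) : option (nat * item) :=
  match h with
  | [::] => None
  | t :: h' =>
    match root t, minr h' with
    | None, None => None
    | None, Some (i, e) => Some (i.+1, e)
    | Some x, None => Some (0, x)
    | Some x, Some (i, e) =>
      if (ikey x <= ikey e)%O then Some (0, x) else Some (i.+1, e)
    end
  end.

(* Finding the minimum uses the first suffix-min
   reference (cost 1).  If C(e) is nonempty an item of it is removed in
   constant time; otherwise e is removed, its root (the i-th tree) is
   refilled, and the suffix-min references of the trees 0..i are updated
   (cost i+1). *)
Definition extract (h : heap) : option (T * V) * heap * nat :=
  match minr h with
  | None => (None, h, 1)
  | Some (i, e) =>
    match icset e with
    | p :: cs =>
      (Some (ikey e, p.2),
       set_nth (Leaf None) h i
               (set_root (Some (Item (ikey e) (ival e) cs))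
                         (nth (Leaf None) h i)), 1)
    | [::] =>
      let: (t', c) := fillt (nth (Leaf None) h i) in
      (Some (ikey e, ival e), set_nth (Leaf None) h i t', (c + i.+1).+1)
    end
  end.

End SoftHeap.

Inductive op {disp : Order.disp_t} (T : orderType disp) (V : Type) :=
| OpInsert of T & V
| OpExtractMin.
Arguments OpExtractMin {disp T V}.

Section Run.
Context {disp : Order.disp_t} (T : orderType disp) (V : Type).

Fixpoint run_cost (r0 : nat) (h : heap T V) (ops : seq (op T V)) : nat :=
  match ops with
  | [::] => 0
  | OpInsert k v :: ops' =>
    let: (h', c) := insert r0 k v h in c + run_cost r0 h' ops'
  | OpExtractMin :: ops' =>
    let: (_, h', c) := extract r0 h in c + run_cost r0 h' ops'
  end.

Definition total_time (eps : R) (ops : seq (op T V)) : nat :=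
  run_cost (r0_of eps) [::] ops.

Definition inserted_keys (ops : seq (op T V)) : seq T :=
  pmap (fun o => if o is OpInsert k _ then Some k else None) ops.

Definition num_inserts (ops : seq (op T V)) : nat := size (inserted_keys ops).

Definition num_extracts (ops : seq (op T V)) : nat :=
  count (fun o => if o is OpExtractMin then true else false) ops.

End Run.

(* Main.v *)
Require Import Defs.
From Stdlib Require Import Reals.
From Stdlib Require Import ZArith Lra Psatz.
From mathcomp Require Import all_boot all_order.
From mathcomp Require Import zify.

Set Implicit Arguments.
Unset Strict Implicit.
Unset Printing Implicit Defensive.

Section Pot.
Context {disp : Order.disp_t} (T : orderType disp) (V : Type).
Variable r0 : nat.
Hypothesis Hr0 : 2 <= r0.

Local Notation tree := (tree T V).
Local Notation item := (item T V).

Definition cap h := 2 ^ (h - r0) - 1.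
Definition P0 := 2 * r0 + 4.
Definition pp h := if r0 <= h then 2 ^ (h - r0) * P0 else 0.
Definition KK := 8 * r0.
Definition csz (e : item) := size (icset e).
Definition phio h (o : option item) :=
  match o with Some e => pp h + KK * (cap h - csz e) | None => KK * cap h end.
Definition anyroot (a b c : tree) :=
  [|| isSome (Defs.root a), isSome (Defs.root b) | isSome (Defs.root c)].
Definition psi h (a b c : tree) := if (r0 < h) && anyroot a b c then pp h else 0.
Definition okitem h (o : option item) :=
  match o with Some e => csz e <= cap h | None => true end.

Fixpoint Phi (t : tree) : nat :=
  match t with
  | Leaf o => phio 0 o
  | Node o a b c => phio (height a).+1 o + psi (height a).+1 a b c + Phi a + Phi b + Phi c
  end.

Fixpoint wf (t : tree) : bool :=
  match t with
  | Leaf o => okitem 0 o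
  | Node o a b c => [&& wf a, wf b, wf c, height a == height b, height b == height c
                      & okitem (height a).+1 o]
  end.

Definition BB h := if h < r0 then 2 * h + 1 else 4 * r0 + 5.

Lemma height_node o (a b c : tree) : height a = height b -> height b = height c ->
  height (Node o a b c) = (height a).+1.
Proof. move=> e1 e2 /=; rewrite -e2 -e1 !maxnn //. Qed.

Lemma cap_low h : h <= r0 -> cap h = 0.
Proof. by move=> H; rewrite /cap; have ->: h - r0 = 0 by lia. Qed.

Lemma cap_S h : r0 <= h -> cap h.+1 = (cap h).*2.+1.
Proof.
move=> H; rewrite /cap; have ->: h.+1 - r0 = (h - r0).+1 by lia.
rewrite expnS; have := expn_gt0 2 (h - r0); lia.
Qed.

Lemma pp_S h : r0 <= h -> pp h.+1 = (pp h).*2.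
Proof.
move=> H; rewrite /pp H; have ->: r0 <= h.+1 by lia.
have ->: h.+1 - r0 = (h - r0).+1 by lia. rewrite expnS; lia.
Qed.

Lemma pp_ge h : r0 <= h -> P0 <= pp h.
Proof. move=> H; rewrite /pp H; have := expn_gt0 2 (h - r0); rewrite /P0; nia. Qed.

Lemma pp_low h : h < r0 -> pp h = 0.
Proof. by move=> H; rewrite /pp; case: leqP => //; lia. Qed.


Lemma wf_height o (a b c : tree) : wf (Node o a b c) -> height (Node o a b c) = (height a).+1.
Proof. by case/and5P=> _ _ _ /eqP e1 /andP[/eqP e2 _]; apply: height_node. Qed.

Lemma wf_max o (a b c : tree) : wf (Node o a b c) ->
  maxn (height a) (maxn (height b) (height c)) = height a.
Proof. by case/and5P=> _ _ _ /eqP e1 /andP[/eqP e2 _]; rewrite -e2 -e1 !maxnn. Qed.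

Lemma root_ok t : wf t -> okitem (height t) (Defs.root t).
Proof. case: t => [o|o a b c] //= H. rewrite (wf_max H).
by case/and5P: H => _ _ _ _ /andP[]. Qed.

Lemma Phi_set_root t o : wf t ->
  Phi (set_root o t) + phio (height t) (Defs.root t) = Phi t + phio (height t) o.
Proof.
case: t => [o'|o' a b c] /= H; first lia.
rewrite (wf_max H) /=; lia.
Qed.

Lemma wf_set_root t o : wf t -> okitem (height t) o -> wf (set_root o t).
Proof.
case: t => [o'|o' a b c] //= H; rewrite (wf_max H).
by case/and5P: H => -> -> -> -> /andP[-> _] ->.
Qed.

Lemma height_set_root (t : tree) o : height (set_root o t) = height t.
Proof. by case: t. Qed.

Definition fill_ok m := forall t : tree, wf t -> height t = m ->
  wf (fill r0 m t).1 /\ height (fill r0 m t).1 = m /\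
  (fill r0 m t).2 + Phi (fill r0 m t).1 <= Phi (set_root None t) + BB m.

Lemma pull_child m (X : tree) x : fill_ok m -> wf X -> height X = m -> Defs.root X = Some x ->
  [/\ wf (fill r0 m X).1, height (fill r0 m X).1 = m, csz x <= cap m &
   (fill r0 m X).2 + Phi (fill r0 m X).1 + pp m <= Phi X + KK * csz x + BB m].
Proof.
move=> IH wX hX rX; have [w1 [h1 c1]] := IH X wX hX.
have ok := root_ok wX; rewrite rX hX /= in ok.
have E := Phi_set_root None wX; rewrite rX hX /= in E.
split=> //. move: E c1; rewrite /phio mulnBr.
have : KK * csz x <= KK * cap m by rewrite leq_mul2l ok orbT.
lia.
Qed.

Lemma pull_spec m (a b c : tree) : fill_ok m -> wf a -> wf b -> wf c ->
  height a = m -> height b = m -> height c = m ->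
  match pull (fill r0 m) a b c with
  | (None, a', b', c', k) => [/\ ~~ anyroot a b c, a' = a, b' = b, c' = c & k = 1]
  | (Some x, a', b', c', k) =>
     [/\ anyroot a b c, [&& wf a', wf b' & wf c'],
         [/\ height a' = m, height b' = m & height c' = m], csz x <= cap m &
         k + Phi a' + Phi b' + Phi c' + pp m <= Phi a + Phi b + Phi c + KK * csz x + 1 + BB m]
  end.
Proof.
move=> IH wa wb wc ha hb hc; rewrite /pull /anyroot.
case Ea: (Defs.root a) => [xa|]; case Eb: (Defs.root b) => [xb|];
  case Ec: (Defs.root c) => [xc|] /=;
  repeat (case: ifP => _);
  try match goal with
  | |- context [fill r0 m a] => have [w1 h1 c1 q1] := pull_child IH wa ha Ea;
          case: (fill r0 m a) w1 h1 q1 => X' kx /= w1 h1 q1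
  | |- context [fill r0 m b] => have [w1 h1 c1 q1] := pull_child IH wb hb Eb;
          case: (fill r0 m b) w1 h1 q1 => X' kx /= w1 h1 q1
  | |- context [fill r0 m c] => have [w1 h1 c1 q1] := pull_child IH wc hc Ec;
          case: (fill r0 m c) w1 h1 q1 => X' kx /= w1 h1 q1
  end;
  try (split => //; rewrite ?w1 ?wa ?wb ?wc //; lia).
Qed.

Lemma fill_spec n : fill_ok n.
Proof.
elim: n => [|n IH] [o|o a b c] wt ht.
- rewrite /= cap_low //=; rewrite /BB; case: ifP => //; lia.
- by move: ht; rewrite /= (wf_max wt).
- by move: ht.
- move: (ht); rewrite /= (wf_max wt) => -[ha].
  have /and5P[wa wb wc /eqP hab /andP[/eqP hbc _]] := wt.
  change (is_true (wf a)) in wa; change (is_true (wf b)) in wb; change (is_true (wf c)) in wc.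
  have hb : height b = n by rewrite -hab.
  have hc : height c = n by rewrite -hbc.
  clear wt ht hab hbc.
  have := pull_spec IH wa wb wc ha hb hc.
  rewrite /= ha.
  have capm : cap n <= cap n.+1.
    case: (leqP r0 n) => H.
      rewrite cap_S //; lia.
    rewrite cap_low //; lia.
  case: (pull (fill r0 n) a b c) => [[[[e1 a1] b1] c1] k1].
  case: ifP => Hlow.
  - case: e1 => [x|] /=.
    + case=> any /and3P[w1 w2 w3] [h1 h2 h3] cx q.
      have cn : cap n = 0 by rewrite cap_low //; lia.
      have cn1 : cap n.+1 = 0 by rewrite cap_low //; lia.
      rewrite w1 w2 w3 h1 -h2 h2 -h3 h3 eqxx /= cn1.

      have -> : psi n.+1 a1 b1 c1 = 0 by rewrite /psi; have ->: r0 < n.+1 = false by lia.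
      have -> : psi n.+1 a b c = 0 by rewrite /psi; have ->: r0 < n.+1 = false by lia.
      split; first by move: cx; rewrite cn; lia.
      split; first by rewrite ?maxnn.
      have ppn : pp n = 0 by rewrite pp_low.
      move: q cx; rewrite ppn cn /BB Hlow /pp; case: ifP => H1.
      * have -> : n.+1 = r0 by lia.
        rewrite subnn expn0 /P0 /= ; have -> : r0 < r0 = false by lia. lia.
      * have -> : n.+1 < r0 by lia. lia.
    + case=> _ -> -> -> -> /=. rewrite wa wb wc ha -hb hb -hc hc eqxx /=.
      split=> //; split; first by rewrite ?maxnn. rewrite /BB; case: ifP; lia.
  - case: e1 => [x1|] /=.
    + case=> any /and3P[w1 w2 w3] [h1 h2 h3] cx1 q1.
      have Hh : r0 <= n by (timeout 10 lia).
      have := pull_spec IH w1 w2 w3 h1 h2 h3.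
      case: (pull (fill r0 n) a1 b1 c1) => [[[[e2 a2] b2] c2] k2].
      have psi0 : psi n.+1 a b c = pp n.+1.
        by rewrite /psi any; have ->: r0 < n.+1 by (timeout 10 lia).
      have BBe : BB n.+1 = BB n.
        rewrite /BB; case: ifP => ?; case: ifP => ?; (timeout 10 lia).
      have ppS := pp_S Hh. have ppg := pp_ge Hh.
      have capS := cap_S Hh.
      have KKc : KK * cap n.+1 = 2 * (KK * cap n) + KK by rewrite capS; (timeout 10 lia).
      case: e2 => [x2|] /=.
      * case=> any2 /and3P[v1 v2 v3] [g1 g2 g3] cx2 q2.
        rewrite v1 v2 v3 g1 -g2 g2 -g3 g3 eqxx /=.
        have cszE : csz {| ikey := ikey x2; ival := ival x2;
                           icset := icset x2 ++ (ikey x1, ival x1) :: icset x1 |}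
                    = csz x2 + csz x1 + 1 by rewrite /csz /= size_cat /= addnS addn1.
        rewrite cszE.
        have cx : csz x2 + csz x1 + 1 <= cap n.+1.
          by rewrite capS; move: cx1 cx2; clear; lia.
        split => //. split; first by rewrite ?maxnn.
        have psil : psi n.+1 a2 b2 c2 <= pp n.+1 by rewrite /psi; case: ifP.
        have hK : KK * (csz x2 + csz x1 + 1) <= KK * cap n.+1 by rewrite leq_mul2l cx orbT.
        rewrite psi0 mulnBr.
        rewrite !mulnDr muln1 in hK *.
        have hKK : 4 * r0 + 8 <= KK by rewrite /KK; move: Hr0; clear; lia.
        have BBn : BB n = 4 * r0 + 5 by rewrite /BB ifF //; move: Hh; clear; lia.
        rewrite BBe BBn in q1 q2 *. rewrite ppS in psil *. rewrite /P0 in ppg.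
        move: q1 q2 psil hK hKK ppg; clear; lia.
      * case=> nany -> -> -> -> /=. rewrite w1 w2 w3 h1 -h2 h2 -h3 h3 eqxx /=.
        split; first by move: cx1 capm; clear; lia.
        split; first by rewrite ?maxnn.
        have -> : psi n.+1 a1 b1 c1 = 0 by rewrite /psi (negbTE nany) andbF.
        rewrite psi0 mulnBr BBe.
        have : KK * csz x1 <= KK * cap n.+1 by rewrite leq_mul2l; apply/orP; right; move: cx1 capm; clear; lia.
        move: q1 ppg; rewrite /P0; clear; lia.
    + case=> nany -> -> -> -> /=. rewrite wa wb wc ha -hb hb -hc hc eqxx /=.
      split=> //; split; first by rewrite ?maxnn.
      have -> : psi n.+1 a b c = 0 by rewrite /psi (negbTE nany) andbF.
      rewrite /BB; case: ifP; clear; lia.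
Qed.


Definition DD h := 1 + BB h + KK * cap h + pp h.
Fixpoint SS r := if r is r'.+1 then 3 * SS r' + DD r'.+1 else 0.
Definition T0 := 20.
Definition MM := 14 * r0 + 20.

Lemma DD_low h : h < r0 -> DD h = 2 * h + 2.
Proof. move=> H; rewrite /DD /BB H cap_low ?pp_low; lia. Qed.

Lemma DD_r0 : DD r0 = 6 * r0 + 10.
Proof. rewrite /DD /BB ltnn cap_low // /pp leqnn subnn /P0; lia. Qed.

Lemma DD_high h : r0 < h -> DD h <= 2 ^ (h - r0) * (14 * r0 + 10).
Proof.
move=> H; rewrite /DD /BB /KK /cap /pp /P0.
have -> : h < r0 = false by lia.
have -> : r0 <= h by lia.
have := expn_gt0 2 (h - r0). move: (2 ^ (h - r0)) => x hx.
rewrite mulnBr muln1. have : 8 * r0 <= 8 * r0 * x by rewrite leq_pmulr. nia.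
Qed.

Lemma SS_bound r : SS r + r + 3 + (if r0 <= r then MM * 2 ^ (r - r0 + 1) else 0)
   <= 3 ^ r.+1 + (if r0 <= r then MM * 3 ^ (r - r0 + 1) else 0).
Proof.
elim: r => [|r IH] /=.
  have -> : r0 <= 0 = false by lia. by [].
case: (ltngtP r.+1 r0) => H.
-   have E : r0 <= r = false by lia. rewrite E in IH.
  rewrite DD_low // expnS. lia.
- move: IH.
  have -> : r0 <= r by lia.
  have -> : r.+1 - r0 + 1 = (r - r0 + 1).+1 by lia.
  have := DD_high H. rewrite !expnS.
  have -> : r.+1 - r0 = r - r0 + 1 by lia.
  move: (2 ^ (r - r0 + 1)) (3 ^ (r - r0 + 1)) (3 ^ r.+1) (SS r) (DD r.+1) => x y z s d.
  rewrite /MM. nia.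
- have E : r0 <= r = false by lia. rewrite E in IH.
  rewrite H DD_r0 subnn add0n !expn1 expnS /MM.
  move: IH; rewrite H; lia.
Qed.

Lemma pow3_ge : 4 * r0 + 1 <= 3 ^ r0.
Proof.
elim: r0 Hr0 => [|k IHk] // Hk.
case: (ltngtP k 2) => H.
- have -> : k = 1 by lia. by [].
- rewrite expnS; have := IHk (ltnW H); lia.
- by rewrite H.
Qed.

Lemma SS_le r : SS r <= T0 * 3 ^ r.
Proof.
have := SS_bound r. rewrite /T0. case: (leqP r0 r) => H.
- have E : 3 ^ r = 3 ^ (r - r0) * 3 ^ r0 by rewrite -expnD subnK.
  rewrite expnS E !addn1 !expnS.
  have := pow3_ge.
  move: (3 ^ (r - r0)) (3 ^ r0) (SS r) (2 ^ (r - r0)) => x y s z hy.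
  have h1 : 3 * MM <= 17 * y by rewrite /MM; lia.
  have h2 : 3 * MM * x <= 17 * y * x by rewrite leq_mul2r h1 orbT.
  have -> : MM * (3 * x) = 3 * MM * x by rewrite mulnA (mulnC MM).
  have -> : 3 * (x * y) = 3 * (y * x) by rewrite (mulnC x).
  have -> : 20 * (x * y) = 20 * (y * x) by rewrite (mulnC x).
  move: h2; rewrite -(mulnA 17). move: (y * x) (MM * (2 * z)) (3 * MM * x) => u v w. lia.
- rewrite expnS. lia.
Qed.

Definition tau r := T0 * 3 ^ r - SS r.

Lemma tau_step r : tau r.+1 + DD r.+1 = 3 * tau r.
Proof.
have := SS_le r.+1; have := SS_le r. rewrite /tau /= expnS. lia.
Qed.

Fixpoint PhiH (l : seq tree) : nat :=
  if l is t :: l' then tau (height t) + Phi t + PhiH l' else 0.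

Fixpoint noTriple (s : seq nat) : bool :=
  match s with
  | a :: s' => (match s' with b :: c :: _ => ~~ ((a == b) && (b == c)) | _ => true end)
               && noTriple s'
  | [::] => true
  end.

Definition goodH (l : seq tree) :=
  [&& all wf l, sorted leq (map (fun u : tree => height u) l) & noTriple (map (fun u : tree => height u) l)].

Lemma link_sorted r s : sorted leq [:: r, r, r & s] -> noTriple [:: r, r & s] ->
  sorted leq (r.+1 :: s).
Proof.
case: s => [|x s] //= /and3P[_ _ /andP[rx px]] /andP[/negP nt _].
rewrite px andbT ltn_neqAle rx andbT; apply/negP => /eqP E; apply: nt.
by rewrite E !eqxx.
Qed.

Lemma links_spec n t rest : size rest < n -> all wf (t :: rest) ->
  sorted leq (map (fun u : tree => height u) (t :: rest)) -> noTriple (map (fun u : tree => height u) rest) ->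
  goodH (links r0 n (t :: rest)).1 /\
  (links r0 n (t :: rest)).2 + PhiH (links r0 n (t :: rest)).1 <= PhiH (t :: rest) + 1.
Proof.
elim: n t rest => [|n IH] t rest //.
case: rest => [|t2 [|t3 rest]] Hs Hw Hso Hnt.
- by rewrite /goodH /= andbT; move: Hw => /= ->; split => //; lia.
- by rewrite /goodH /=; move: Hw Hso => /= -> /= ->; split => //; lia.
- rewrite /=. case: ifP => Hc.
  + move: Hc => /andP[/eqP e1 /eqP e2].
    move: Hw => /= /and4P[wt w2 w3 wr].
    have wN : wf (Node None t t2 t3) by rewrite /= wt w2 w3 e1 e2 !eqxx.
    have hN : height (Node None t t2 t3) = (height t).+1 by apply: height_node.
    rewrite /fillt hN.
    have [wT [hT cT]] := fill_spec wN hN.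
    case: (fill r0 (height t).+1 (Node None t t2 t3)) wT hT cT => TT c /= wT hT cT.
    have Hs' : size rest < n by move: Hs => /=; lia.
    have Hw' : all wf (TT :: rest) by rewrite /= wT wr.
    have Hso' : sorted leq (map (fun u : tree => height u) (TT :: rest)).
      rewrite /= hT; apply: link_sorted.
      by move: Hso; rewrite /= -e2 -e1.
      by move: Hnt; rewrite !map_cons -e2 -e1.
    have Hnt' : noTriple (map (fun u : tree => height u) rest).
      by move: Hnt => /= /andP[_ /andP[_]].
    have [G C] := IH TT rest Hs' Hw' Hso' Hnt'.
    case: (links r0 n (TT :: rest)) G C => l' c' /= G C.
    split => //.
    have := tau_step (height t). rewrite /DD.
    have : psi (height t).+1 t t2 t3 <= pp (height t).+1 by rewrite /psi; case: ifP.
    move: C cT; rewrite /= hT -e2 -e1.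
    clear IH Hw' Hso' Hnt' G Hso Hnt wT wt w2 w3 wr Hs Hs' wN hN hT. lia.
  + split; last by rewrite /=; lia.
    rewrite /goodH Hw Hso /= Hc /=. by move: Hnt => /= ->.
Qed.

Lemma insert_spec k v (l : seq tree) : goodH l ->
  goodH (insert r0 k v l).1 /\ (insert r0 k v l).2 + PhiH (insert r0 k v l).1 <= PhiH l + T0 + 2.
Proof.
case/and3P=> Hw Hso Hnt.
rewrite /insert.
have Hw1 : all wf (Leaf (Some (Item k v [::])) :: l).
  by rewrite /= Hw.
have Hs : sorted leq (map (fun u : tree => height u) (Leaf (Some (Item k v [::])) :: l)).
  by rewrite map_cons /=; case: (map _ l) Hso => //= x s ->.
have [G C] := links_spec (ltnSn (size l)) Hw1 Hs Hnt.
case: (links r0 (size l).+1 (Leaf (Some (Item k v [::])) :: l)) G C => l' c /= G C.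
split => //. move: C; rewrite /tau /= /pp; have ->: r0 <= 0 = false by lia.
rewrite muln1 cap_low //; lia.
Qed.

Lemma minr_spec (l : seq tree) i e : minr l = Some (i, e) ->
  i < size l /\ Defs.root (nth (Leaf None) l i) = Some e.
Proof.
elim: l i e => [|t l IH] i e //=.
case Ht: (Defs.root t) => [x|]; case: (minr l) IH => [[j f]|] IH.
- case: ifP => _ [<- <-] //=.
  by have [H1 H2] := IH j f erefl; split.
- by case=> <- <-.
- case=> <- <-. by have [H1 H2] := IH j f erefl; split.
- by [].
Qed.

Lemma PhiH_set_nth (l : seq tree) i t' : i < size l ->
  height t' = height (nth (Leaf None) l i) ->
  PhiH (set_nth (Leaf None) l i t') + Phi (nth (Leaf None) l i) = PhiH l + Phi t'.
Proof.
elim: l i => [|t l IH] [|i] //= Hi Ht.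
- rewrite Ht; lia.
- have := IH i Hi Ht; lia.
Qed.

Lemma goodH_set_nth (l : seq tree) i t' : i < size l -> goodH l -> wf t' ->
  height t' = height (nth (Leaf None) l i) -> goodH (set_nth (Leaf None) l i t').
Proof.
move=> Hi /and3P[Hw Hso Hnt] wt' Ht.
have E : map (fun u : tree => height u) (set_nth (Leaf None) l i t') =
         map (fun u : tree => height u) l.
  elim: l i Hi Ht {Hw Hso Hnt} => [|t l IH] [|i] //= Hi Ht; first by rewrite Ht.
  by rewrite IH.
rewrite /goodH E Hso Hnt andbT andbT.
elim: l i Hi Ht Hw {Hso Hnt E} => [|t l IH] [|i] //= Hi Ht /andP[wt wl].
  by rewrite wt' wl.
by rewrite wt IH.
Qed.

Lemma idx_nat n : forall (s : seq nat) m i, size s <= n -> sorted leq s -> noTriple s ->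
  all (leq m) s -> i < size s -> 2 * m + i <= 2 * nth 0 s i + 1.
Proof.
elim: n => [|n IH] [|a s] m i //= Hn Hso Hnt Hall Hi.
move: Hall => /andP[ma Hall].
case: i Hi => [|[|j]] Hi /=; first lia.
- case: s Hn Hso Hnt Hall Hi => [|b s] //= Hn /andP[ab _] _ _ _. lia.
- case: s Hn Hso Hnt Hall Hi => [|b [|c s]] //= Hn /andP[ab /andP[bc Hso]] /andP[nt /andP[_ Hnt]] /and3P[_ _ Hall] Hi.
  have mc : m < c.
    rewrite ltn_neqAle (leq_trans ma (leq_trans ab bc)) andbT.
    apply/negP=> /eqP E. move: nt; rewrite -E.
    have e1 : a == m by rewrite eqn_leq ma andbT E (leq_trans ab bc).
    have e2 : b == m by rewrite eqn_leq (leq_trans ma ab) andbT E bc.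
    by rewrite (eqP e1) (eqP e2) !eqxx.
  have := IH (c :: s) m.+1 j.
  rewrite /= Hso Hnt.
  have Hall2 : all (leq m.+1) s.
    apply/allP => x xs. have := order_path_min leq_trans Hso.
    move/allP/(_ x xs) => cx. exact: leq_trans mc cx.
  rewrite mc Hall2 /=. move=> /(_ ltac:(lia) isT isT isT ltac:(lia)). lia.
Qed.

Lemma idx_bound (l : seq tree) i : goodH l -> i < size l ->
  i <= 2 * height (nth (Leaf None) l i) + 1.
Proof.
case/and3P=> _ Hso Hnt Hi.
have := @idx_nat (size l) (map (fun u : tree => height u) l) 0 i.
rewrite size_map leqnn Hso Hnt Hi.
have -> : all (leq 0) (map (fun u : tree => height u) l) by apply/allP.
rewrite (nth_map (Leaf None)) //. move=> /(_ isT isT isT isT isT). lia.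
Qed.

Lemma extr_arith r i : i <= 2 * r + 1 -> i + 2 + BB r <= pp r + 10 * r0.
Proof.
move=> Hi; rewrite /BB /pp; case: ifP => H1.
- have -> : r0 <= r = false by lia. lia.
- have -> : r0 <= r by lia.
  have := ltn_expl (r - r0) (ltnSn 1). rewrite /P0.
  move: (2 ^ (r - r0)) => x hx. nia.
Qed.

Lemma extract_spec (l : seq tree) : goodH l ->
  goodH (extract r0 l).1.2 /\ (extract r0 l).2 + PhiH (extract r0 l).1.2 <= PhiH l + 10 * r0.
Proof.
move=> G; rewrite /extract.
case Em: (minr l) => [[i e]|]; last by split => //=; lia.
have [Hi Hr] := minr_spec Em.
have wt : wf (nth (Leaf None) l i).
  by case/and3P: G => /(all_nthP (Leaf None)) Hw _ _; apply: Hw.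
have ok := root_ok wt; rewrite Hr /= in ok.
have Ib := idx_bound G Hi.
case Ec: (icset e) => [|p cs].
- rewrite /fillt.
  have [w' [h' c']] := fill_spec wt erefl.
  case: (fill r0 (height (nth (Leaf None) l i)) (nth (Leaf None) l i)) w' h' c' => t' c /= w' h' c'.
  split; first exact: goodH_set_nth.
  have E1 := PhiH_set_nth Hi h'.
  have E2 := Phi_set_root None wt. rewrite Hr /= /csz Ec /= subn0 in E2.
  have := extr_arith Ib. move: E1 E2 c'.
  move: (height (nth (Leaf None) l i)) => r. lia.
- set e' := Item (ikey e) (ival e) cs.
  have oke : okitem (height (nth (Leaf None) l i)) (Some e').
    by move: ok; rewrite /= /csz Ec /=; lia.
  have w2 := wf_set_root wt oke.
  have h2 := height_set_root (nth (Leaf None) l i) (Some e').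
  split; first exact: goodH_set_nth.
  have E1 := PhiH_set_nth Hi h2.
  have E2 := Phi_set_root (Some e') wt. rewrite Hr /= /csz Ec /= in E2.
  move: ok; rewrite /csz Ec /= => ok.
  have : KK * (cap (height (nth (Leaf None) l i)) - (size cs).+1) + KK =
         KK * (cap (height (nth (Leaf None) l i)) - size cs).
    rewrite -[X in _ + X]muln1 -mulnDr; congr (_ * _); lia.
  have : KK <= 8 * r0 by [].
  move: E1 E2. move: (cap _) => cp. lia.
Qed.

Lemma run_spec (ops : seq (op T V)) (l : seq tree) : goodH l ->
  run_cost r0 l ops <= PhiH l + (T0 + 2) * num_inserts ops + 10 * r0 * num_extracts ops.
Proof.
elim: ops l => [|o ops IH] l G; first by rewrite /=; lia.
case: o => [k v|].
- rewrite [in X in X <= _]/=. have [G' C] := insert_spec k v G.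
  case: (insert r0 k v l) G' C => l' c G' C.
  have := IH l' G'.
  have -> : num_inserts (OpInsert k v :: ops) = (num_inserts ops).+1 by [].
  have -> : num_extracts (OpInsert k v :: ops) = num_extracts ops by [].
  rewrite /T0; move: C; rewrite /= /T0; lia.
- rewrite [in X in X <= _]/=. have [G' C] := extract_spec G.
  case: (extract r0 l) G' C => [[x l'] c] G' C.
  have := IH l' G'.
  have -> : num_inserts (OpExtractMin :: ops) = num_inserts ops by [].
  have -> : num_extracts (OpExtractMin :: ops) = (num_extracts ops).+1 by [].
  rewrite mulnS; move: C; rewrite /=; lia.
Qed.

End Pot.

Lemma total_bound {disp : Order.disp_t} (T : orderType disp) (V : Type) eps (ops : seq (op T V)) :
  total_time eps ops <= 22 * num_inserts ops + 10 * r0_of eps * num_extracts ops.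
Proof.
have H : 2 <= r0_of eps by rewrite /r0_of leq_maxl.
have := @run_spec disp T V (r0_of eps) H ops [::] isT.
by rewrite /total_time /=.
Qed.

From Stdlib Require Import Reals Lra Psatz.

Lemma L_ge1 eps : (0 < eps)%R -> (eps <= / 2)%R -> (1 <= lg (/ eps))%R.
Proof.
move=> e0 e2.
have ie : (2 <= / eps)%R.
  have -> : (2 = / / 2)%R by field.
  apply: Rinv_le_contravar => //.
have l2 : (0 < ln 2)%R by have := ln_lt_2; lra.
have : (ln 2 <= ln (/ eps))%R.
  case: (Rle_lt_or_eq_dec _ _ ie) => H; last by rewrite H; lra.
  by apply: Rlt_le; apply: ln_increasing => //; lra.
rewrite /lg => H.
apply: (Rmult_le_reg_r (ln 2)) => //.
rewrite /Rdiv Rmult_assoc Rinv_l; lra.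
Qed.

Lemma r0_le eps : (0 < eps)%R -> (eps <= / 2)%R -> (INR (r0_of eps) <= 2 * lg (/ eps))%R.
Proof.
move=> e0 e2; have := L_ge1 e0 e2.
rewrite /r0_of; move: (lg (/ eps)) => L L1.
have hz : (IZR (Rceil L) < 1 + L)%R.
  rewrite /Rceil minus_IZR. have [h1 _] := archimed (- L). lra.
move: (Rceil L) hz => z hz.
have hz' : (INR (Z.to_nat z) <= 1 + L)%R.
  case: (Z_le_gt_dec 0 z) => H.
  - rewrite INR_IZR_INZ Z2Nat.id //; lra.
  - have -> : Z.to_nat z = 0%N by case: z H {hz} => [|p|p] //= H.
    rewrite /=; lra.
rewrite /maxn; case: ifP => _; first lra.
rewrite /=. lra.
Qed.

Theorem mainTheorem12 :
  exists C : R,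
    forall (disp : Order.disp_t) (T : orderType disp) (V : Type) (eps : R),
      (0 < eps)%R -> (eps <= / 2)%R ->
      forall ops : seq (op T V),
        uniq (inserted_keys ops) ->
        (INR (total_time eps ops)
           <= C * (INR (num_inserts ops) + INR (num_extracts ops) * lg (/ eps)))%R.
Proof.
exists 30%R => disp T V eps e0 e2 ops _.
have B := total_bound eps ops.
have L1 := L_ge1 e0 e2. have Hr := r0_le e0 e2.
move/leP: B => B. apply le_INR in B.
rewrite -plusE -!multE plus_INR !mult_INR in B.
have n0 := pos_INR (num_inserts ops). have d0 := pos_INR (num_extracts ops).
move: B Hr. rewrite /=.
move: (INR (r0_of eps)) (INR (num_extracts ops)) (INR (num_inserts ops)) (lg (/ eps)) L1 n0 d0 => r d n L *.
nra.
Qed.
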